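(* Let $F$ be a field with $\mathrm{char}\,F\ne2$ and let $A$ be an involutive $F$-algebra. The following are equivalent: (i) $A$ is von-Neumann finite; (ii) every $3$-dimensional subalgebra of $A$ is either commutative or associative; (iii) every $3$-dimensional subalgebra of $A$ is either commutative or isomorphic to the algebra $U$ of upper triangular $2\times2$ matrices over $F$.
   Context: Algebras are unital, with bilinear not necessarily associative multiplication. $A$ is involutive if there is an anti-automorphism $a\mapsto\bar a$ with $\bar{\bar a}=a$, $a+\bar a\in F1$ and $a\bar a\in F1$ for all $a\in A$. $A$ is von-Neumann finite if $ab=1$ implies $ba=1$ for all $a,b\in A$. *)

(* Defs.v *)
From HB Require Import structures.
From mathcomp Require Import all_boot all_order all_algebra.
Set Implicit Arguments. Unset Strict Implicit. Unset Printing Implicit Defensive.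
Import GRing.Theory.
Local Open Scope ring_scope.

(* A unital, not necessarily associative F-algebra is given by a vector space
   V over F together with a bilinear multiplication [mul] and a unit [one]. *)
Section NAlg.
Variables (F : fieldType) (V : lmodType F).

Definition bilinear_mul (mul : V -> V -> V) : Prop :=
  (forall (a : F) (x y z : V), mul (a *: x + y) z = a *: mul x z + mul y z) /\
  (forall (a : F) (x y z : V), mul x (a *: y + z) = a *: mul x y + mul x z).

Definition is_unit_elt (mul : V -> V -> V) (one : V) : Prop :=
  forall x, mul one x = x /\ mul x one = x.

Definition involutive_alg (mul : V -> V -> V) (one : V) (bar : V -> V) : Prop :=
  [/\ (forall (a : F) (x y : V), bar (a *: x + y) = a *: bar x + bar y),
      bijective bar,
      (forall x y, bar (mul x y) = mul (bar y) (bar x))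
    & (forall x, bar (bar x) = x)] /\
  ((forall x, exists c : F, x + bar x = c *: one) /\
   (forall x, exists c : F, mul x (bar x) = c *: one)).

Definition vN_finite (mul : V -> V -> V) (one : V) : Prop :=
  forall a b, mul a b = one -> mul b a = one.

Definition span3 (e1 e2 e3 : V) : V -> Prop :=
  fun x => exists a b c : F, x = a *: e1 + b *: e2 + c *: e3.

Definition lin_indep3 (e1 e2 e3 : V) : Prop :=
  forall a b c : F, a *: e1 + b *: e2 + c *: e3 = 0 -> [/\ a = 0, b = 0 & c = 0].

Definition is_subalg (mul : V -> V -> V) (one : V) (S : V -> Prop) : Prop :=
  S one /\ (forall x y, S x -> S y -> S (mul x y)).

Definition commutative_on (mul : V -> V -> V) (S : V -> Prop) : Prop :=
  forall x y, S x -> S y -> mul x y = mul y x.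

Definition associative_on (mul : V -> V -> V) (S : V -> Prop) : Prop :=
  forall x y z, S x -> S y -> S z -> mul x (mul y z) = mul (mul x y) z.

Definition upper_tri (M : 'M[F]_2) : Prop :=
  forall i j : 'I_2, (j < i)%N -> M i j = 0.

Definition iso_to_U (mul : V -> V -> V) (S : V -> Prop) : Prop :=
  exists g : 'M[F]_2 -> V,
    [/\ (forall (a : F) (M N : 'M[F]_2), upper_tri M -> upper_tri N ->
           g (a *: M + N) = a *: g M + g N),
        (forall M, upper_tri M -> S (g M)),
        (forall x, S x -> exists2 M, upper_tri M & g M = x),
        (forall M N, upper_tri M -> upper_tri N -> g M = g N -> M = N)
      & (forall M N, upper_tri M -> upper_tri N -> g (M *m N) = mul (g M) (g N))].

End NAlg.

(* Main.v *)
Require Import Defs.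
From HB Require Import structures.
From mathcomp Require Import all_boot all_order all_algebra.
From Stdlib Require Import Classical.
From mathcomp Require Import ring.
Set Implicit Arguments. Unset Strict Implicit. Unset Printing Implicit Defensive.
Import GRing.Theory.
Local Open Scope ring_scope.

Lemma zmod4 (Z : zmodType) (a x y b : Z) : a + x + (y + b) - a - b = x + y.
Proof. by rewrite !addrA (ACl (1*5*2*3*4*6)) /= subrr add0r addrK. Qed.

Lemma zmod5 (Z : zmodType) (p q r s : Z) : p + q + (r + s) - p - q - s = r.
Proof. by rewrite !addrA (ACl (1*5*2*6*3*4*7)) /= subrr add0r subrr add0r addrK. Qed.

Ltac fld := field; try (repeat (apply/andP; split)); try assumption.

Lemma half_inj (F : fieldType) (x y x' y' : F) : (2%:R : F) != 0 ->
  (x + y) / 2%:R = (x' + y') / 2%:R -> (x - y) / 2%:R = (x' - y') / 2%:R -> x = x' /\ y = y'.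
Proof.
move=> h2 e1 e2; split.
- have -> : x = (x + y) / 2%:R + (x - y) / 2%:R by fld.
  by rewrite e1 e2; fld.
- have -> : y = (x + y) / 2%:R - (x - y) / 2%:R by fld.
  by rewrite e1 e2; fld.
Qed.

Definition mk2 (F : fieldType) (a b c d : F) : 'M[F]_2 :=
  \matrix_(i, j) (if (i : nat) == 0%N then (if (j : nat) == 0%N then a else b)
                  else (if (j : nat) == 0%N then c else d)).

Section Lin.
Variables (F : fieldType) (V : lmodType F).
Implicit Types f g e : V.
Definition cmb (f1 f2 f3 : V) (a b c : F) := a *: f1 + b *: f2 + c *: f3.

Lemma cmbD f1 f2 f3 a b c a' b' c' :
  cmb f1 f2 f3 a b c + cmb f1 f2 f3 a' b' c' = cmb f1 f2 f3 (a + a') (b + b') (c + c').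
Proof. by rewrite /cmb !scalerDl addrACA; congr (_ + _); rewrite addrACA. Qed.
Lemma cmbZ f1 f2 f3 k a b c :
  k *: cmb f1 f2 f3 a b c = cmb f1 f2 f3 (k * a) (k * b) (k * c).
Proof. by rewrite /cmb !scalerDr !scalerA. Qed.
Lemma cmbN f1 f2 f3 a b c :
  - cmb f1 f2 f3 a b c = cmb f1 f2 f3 (- a) (- b) (- c).
Proof. by rewrite -scaleN1r cmbZ !mulN1r. Qed.

Lemma cob f1 f2 f3 k1 m1 m2 a b c :
  cmb f1 (k1 *: f2) (m1 *: f2 + m2 *: f3) a b c = cmb f1 f2 f3 a (b * k1 + c * m1) (c * m2).
Proof. by rewrite /cmb scalerDr !scalerA scalerDl !addrA. Qed.

Lemma cmb_inj f1 f2 f3 a b c a' b' c' : lin_indep3 f1 f2 f3 ->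
  cmb f1 f2 f3 a b c = cmb f1 f2 f3 a' b' c' -> [/\ a = a', b = b' & c = c'].
Proof.
move=> hi /eqP; rewrite -subr_eq0 cmbN cmbD => /eqP /hi [x y z].
by split; apply/eqP; rewrite -subr_eq0; apply/eqP.
Qed.

Lemma sc1 f1 f2 f3 k : k *: f1 = cmb f1 f2 f3 k 0 0.
Proof. by rewrite /cmb !scale0r !addr0. Qed.
Lemma sc2 f1 f2 f3 k : k *: f2 = cmb f1 f2 f3 0 k 0.
Proof. by rewrite /cmb !scale0r add0r addr0. Qed.
Lemma sc3 f1 f2 f3 k : k *: f3 = cmb f1 f2 f3 0 0 k.
Proof. by rewrite /cmb !scale0r !add0r. Qed.

Lemma indep_swap f1 f2 f3 : lin_indep3 f1 f2 f3 -> lin_indep3 f1 f3 f2.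
Proof.
move=> h a b c e; have [x y z] := h a c b (ltac:(by rewrite addrAC e)).
by split.
Qed.

Lemma span3_cmb f1 f2 f3 x : span3 f1 f2 f3 x <-> exists a b c, x = cmb f1 f2 f3 a b c.
Proof. by []. Qed.

Lemma span3D f1 f2 f3 x y : span3 f1 f2 f3 x -> span3 f1 f2 f3 y -> span3 f1 f2 f3 (x + y).
Proof.
move=> [a [b [c ->]]] [a' [b' [c' ->]]].
by exists (a + a'), (b + b'), (c + c'); rewrite -[_ + _ + _]/(cmb _ _ _ _ _ _) cmbD.
Qed.
Lemma span3Z f1 f2 f3 k x : span3 f1 f2 f3 x -> span3 f1 f2 f3 (k *: x).
Proof.
move=> [a [b [c ->]]].
by exists (k * a), (k * b), (k * c); rewrite -[_ + _ + _]/(cmb _ _ _ _ _ _) cmbZ.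
Qed.
Lemma span3_0 (f1 f2 f3 : V) : span3 f1 f2 f3 0.
Proof. by exists 0, 0, 0; rewrite !scale0r !addr0. Qed.
Lemma span3N f1 f2 f3 x : span3 f1 f2 f3 x -> span3 f1 f2 f3 (- x).
Proof. by move=> h; rewrite -scaleN1r; apply: span3Z. Qed.
Lemma span3B f1 f2 f3 x y : span3 f1 f2 f3 x -> span3 f1 f2 f3 y -> span3 f1 f2 f3 (x - y).
Proof. by move=> hx hy; apply: span3D => //; apply: span3N. Qed.
Lemma span3_1 f1 f2 f3 : span3 f1 f2 f3 f1.
Proof. by exists 1, 0, 0; rewrite scale1r !scale0r !addr0. Qed.
Lemma span3_2 f1 f2 f3 : span3 f1 f2 f3 f2.
Proof. by exists 0, 1, 0; rewrite scale1r !scale0r add0r addr0. Qed.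
Lemma span3_3 f1 f2 f3 : span3 f1 f2 f3 f3.
Proof. by exists 0, 0, 1; rewrite scale1r !scale0r !add0r. Qed.

Lemma span3_sub e1 e2 e3 f1 f2 f3 :
  span3 f1 f2 f3 e1 -> span3 f1 f2 f3 e2 -> span3 f1 f2 f3 e3 ->
  forall x, span3 e1 e2 e3 x -> span3 f1 f2 f3 x.
Proof.
move=> h1 h2 h3 x [a [b [c ->]]].
by apply: span3D; [apply: span3D|]; apply: span3Z.
Qed.



Definition o0 : 'I_3 := @Ordinal 3 0 isT.
Definition o1 : 'I_3 := @Ordinal 3 1 isT.
Definition o2 : 'I_3 := @Ordinal 3 2 isT.
Lemma ord3P (i : 'I_3) : i = o0 \/ i = o1 \/ i = o2.
Proof.
case: i => [[|[|[|k]]] hk]; [left|right;left|right;right|by []]; exact: val_inj.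
Qed.

Definition E3 (e1 e2 e3 : V) (i : 'I_3) : V := nth 0 [:: e1; e2; e3] i.
Definition comb (e1 e2 e3 : V) (x : 'rV[F]_3) := \sum_(i < 3) x 0 i *: E3 e1 e2 e3 i.

Lemma combE (e1 e2 e3 : V) x :
  comb e1 e2 e3 x = x 0 o0 *: e1 + x 0 o1 *: e2 + x 0 o2 *: e3.
Proof.
rewrite /comb !big_ord_recl big_ord0 addr0 addrA /E3 /=.
have -> : lift ord0 ord0 = o1 :> 'I_3 by apply: val_inj.
have -> : lift ord0 (lift ord0 ord0) = o2 :> 'I_3 by apply: val_inj.
by have -> : ord0 = o0 :> 'I_3 by apply: val_inj.
Qed.

Lemma comb_indep (e1 e2 e3 : V) x : lin_indep3 e1 e2 e3 -> comb e1 e2 e3 x = 0 -> x = 0.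
Proof.
move=> hi; rewrite combE => /hi [h0 h1 h2]; apply/rowP => i; rewrite mxE.
by case: (ord3P i) => [->|[->|->]]; rewrite ?ord1.
Qed.

Lemma comb_mulmx (e1 e2 e3 : V) (y : 'rV_3) (M : 'M_3) :
  comb e1 e2 e3 (y *m M) = \sum_(i < 3) y 0 i *: comb e1 e2 e3 (row i M).
Proof.
rewrite /comb; under eq_bigr do rewrite mxE scaler_suml.
rewrite exchange_big; apply: eq_bigr => i _; rewrite scaler_sumr.
by apply: eq_bigr => j _; rewrite !mxE scalerA.
Qed.

Lemma span3_basis (e1 e2 e3 f1 f2 f3 : V) :
  span3 e1 e2 e3 f1 -> span3 e1 e2 e3 f2 -> span3 e1 e2 e3 f3 ->
  lin_indep3 f1 f2 f3 ->
  forall x, span3 e1 e2 e3 x -> span3 f1 f2 f3 x.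
Proof.
move=> [a1 [b1 [c1 h1]]] [a2 [b2 [c2 h2]]] [a3 [b3 [c3 h3]]] hf.
pose C (i j : 'I_3) := nth 0 (nth [::] [:: [:: a1; b1; c1]; [:: a2; b2; c2]; [:: a3; b3; c3]] i) j.
pose M : 'M_3 := \matrix_(i, j) C i j.
have hrow i : comb e1 e2 e3 (row i M) = E3 f1 f2 f3 i.
  rewrite combE !mxE /C /E3.
  by case: (ord3P i) => [->|[->|->]] /=.
have hcf y : comb f1 f2 f3 y = comb e1 e2 e3 (y *m M).
  by rewrite comb_mulmx; apply: eq_bigr => i _; rewrite hrow.
have hM : M \in unitmx.
  rewrite -row_free_unit -kermx_eq0; apply/eqP/row_matrixP => i.
  rewrite row0; apply: (comb_indep hf).
  by rewrite hcf -row_mul mulmx_ker row0 /comb big1 // => j _; rewrite mxE scale0r.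
have he k : span3 f1 f2 f3 (E3 e1 e2 e3 k).
  have : comb e1 e2 e3 (row k (invmx M) *m M) = E3 e1 e2 e3 k.
    rewrite -row_mul mulVmx // combE !mxE.
    by case: (ord3P k) => [->|[->|->]] /=; rewrite ?scale1r ?scale0r ?addr0 ?add0r.
  rewrite -hcf combE => <-.
  by exists (row k (invmx M) 0 o0), (row k (invmx M) 0 o1), (row k (invmx M) 0 o2).
apply: span3_sub; [exact: (he o0)|exact: (he o1)|exact: (he o2)].
Qed.

End Lin.

Section Main.
Variables (F : fieldType) (V : lmodType F) (mul : V -> V -> V).
Variables (one : V) (bar : V -> V).
Hypothesis hbil : bilinear_mul mul.
Hypothesis h2 : (2%:R : F) != 0.
Hypothesis hone : is_unit_elt mul one.
Hypothesis hinv : involutive_alg mul one bar.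
Hypothesis h1 : one != 0.
Implicit Types f g e : V.

Lemma m0l x : mul 0 x = 0.
Proof.
have := hbil.1 1 0 0 x; rewrite !scale1r addr0.
by move/(congr1 (fun t => t - mul 0 x)); rewrite subrr addrK => <-.
Qed.
Lemma m0r x : mul x 0 = 0.
Proof.
have := hbil.2 1 x 0 0; rewrite !scale1r addr0.
by move/(congr1 (fun t => t - mul x 0)); rewrite subrr addrK => <-.
Qed.
Lemma mDl x y z : mul (x + y) z = mul x z + mul y z.
Proof. by have := hbil.1 1 x y z; rewrite !scale1r. Qed.
Lemma mDr x y z : mul x (y + z) = mul x y + mul x z.
Proof. by have := hbil.2 1 x y z; rewrite !scale1r. Qed.
Lemma mZl a x z : mul (a *: x) z = a *: mul x z.
Proof. by have := hbil.1 a x 0 z; rewrite !addr0 m0l addr0. Qed.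
Lemma mZr a x z : mul x (a *: z) = a *: mul x z.
Proof. by have := hbil.2 a x z 0; rewrite !addr0 m0r addr0. Qed.
Lemma mNl x z : mul (- x) z = - mul x z.
Proof. by rewrite -scaleN1r mZl scaleN1r. Qed.
Lemma mNr x z : mul x (- z) = - mul x z.
Proof. by rewrite -scaleN1r mZr scaleN1r. Qed.
Lemma mBl x y z : mul (x - y) z = mul x z - mul y z.
Proof. by rewrite mDl mNl. Qed.
Lemma mBr x y z : mul x (y - z) = mul x y - mul x z.
Proof. by rewrite mDr mNr. Qed.

Lemma mul_cmb f1 f2 f3 a1 a2 a3 b1 b2 b3 :
  mul (cmb f1 f2 f3 a1 a2 a3) (cmb f1 f2 f3 b1 b2 b3) =
  (a1 * b1) *: mul f1 f1 + (a1 * b2) *: mul f1 f2 + (a1 * b3) *: mul f1 f3 +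
  (a2 * b1) *: mul f2 f1 + (a2 * b2) *: mul f2 f2 + (a2 * b3) *: mul f2 f3 +
  (a3 * b1) *: mul f3 f1 + (a3 * b2) *: mul f3 f2 + (a3 * b3) *: mul f3 f3.
Proof. by rewrite /cmb !mDl !mDr !mZl !mZr !scalerA !addrA. Qed.

Lemma span3_mul f1 f2 f3 :
  (forall i j, i \in [:: f1; f2; f3] -> j \in [:: f1; f2; f3] -> span3 f1 f2 f3 (mul i j)) ->
  forall x y, span3 f1 f2 f3 x -> span3 f1 f2 f3 y -> span3 f1 f2 f3 (mul x y).
Proof.
move=> h x y [a1 [a2 [a3 ->]]] [b1 [b2 [b3 ->]]].
rewrite -![_ + _ + _]/(cmb _ _ _ _ _ _) mul_cmb.
by repeat apply: span3D; apply: span3Z; apply: h; rewrite !inE eqxx ?orbT.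
Qed.



Definition p0 : 'I_2 := @Ordinal 2 0 isT.
Definition p1 : 'I_2 := @Ordinal 2 1 isT.
Lemma ord2P (i : 'I_2) : i = p0 \/ i = p1.
Proof. case: i => [[|[|k]] hk]; [left|right|by []]; exact: val_inj. Qed.

Lemma mx2E (M N : 'M[F]_2) i j : (M *m N) i j = M i p0 * N p0 j + M i p1 * N p1 j.
Proof.
rewrite mxE !big_ord_recl big_ord0 addr0.
have -> : lift ord0 ord0 = p1 :> 'I_2 by apply: val_inj.
by have -> : ord0 = p0 :> 'I_2 by apply: val_inj.
Qed.

Lemma ut_mul (M N : 'M[F]_2) : upper_tri M -> upper_tri N -> upper_tri (M *m N).
Proof.
move=> hM hN i j hji; rewrite mxE big1 // => k _.
case: (ltnP k i) => hk; first by rewrite hM // mul0r.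
by rewrite hN ?mulr0 //; apply: leq_trans hk.
Qed.

Lemma iso_assoc (S : V -> Prop) : iso_to_U mul S -> associative_on mul S.
Proof.
move=> [g [hlin hin hsurj hinj hmul]] x y z /hsurj [M hM <-] /hsurj [N hN <-] /hsurj [P hP <-].
have hNP := ut_mul hN hP; have hMN := ut_mul hM hN.
by rewrite -(hmul N P) // -(hmul M _ hM hNP) -(hmul M N) // -(hmul _ P hMN hP) mulmxA.
Qed.

Lemma barD x y : bar (x + y) = bar x + bar y.
Proof. by have := hinv.1; case=> hl _ _ _; rewrite -{1}[x]scale1r hl scale1r. Qed.
Lemma barZ a x : bar (a *: x) = a *: bar x.
Proof.
have := hinv.1; case=> hl _ _ _.
have h0 : bar 0 = 0.
  have := hl 1 0 0; rewrite !scale1r addr0.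
  by move/(congr1 (fun t => t - bar 0)); rewrite subrr addrK => <-.
by rewrite -[a *: x]addr0 hl h0 addr0.
Qed.
Lemma barN x : bar (- x) = - bar x.
Proof. by rewrite -scaleN1r barZ scaleN1r. Qed.
Lemma barB x y : bar (x - y) = bar x - bar y.
Proof. by rewrite barD barN. Qed.
Lemma barM x y : bar (mul x y) = mul (bar y) (bar x).
Proof. by have := hinv.1; case. Qed.
Lemma barK x : bar (bar x) = x.
Proof. by have := hinv.1; case. Qed.
Lemma bar1 : bar one = one.
Proof.
have h y : bar y = mul (bar y) (bar one).
  by rewrite -barM (hone y).1.
have := h (bar one); rewrite barK (hone _).1 => e.
by rewrite -e.
Qed.
Lemma trE x : exists t, x + bar x = t *: one.
Proof. exact: hinv.2.1. Qed.
Lemma nrmE x : exists n, mul x (bar x) = n *: one.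
Proof. exact: hinv.2.2. Qed.

Lemma one_scal_inj a b : a *: one = b *: one -> a = b.
Proof.
move/eqP; rewrite -subr_eq0 -scalerBl scaler_eq0 (negPf h1) orbF subr_eq0.
by move/eqP.
Qed.

Lemma sq_skew u : bar u = - u -> exists k, mul u u = k *: one.
Proof.
move=> hu; have [n hn] := nrmE u; exists (- n).
by rewrite scaleNr -hn hu mNr opprK.
Qed.

Lemma anti_skew u v : bar u = - u -> bar v = - v ->
  exists s, mul u v + mul v u = s *: one.
Proof.
move=> hu hv.
have huv : bar (u + v) = - (u + v) by rewrite barD hu hv opprD.
have [k hk] := sq_skew huv; have [k1 hk1] := sq_skew hu; have [k2 hk2] := sq_skew hv.
exists (k - k1 - k2).
move: hk; rewrite mDl !mDr hk1 hk2 => hk.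
rewrite !scalerBl -hk.
by rewrite zmod4.
Qed.

Lemma quad x : exists t n, mul x x = t *: x - n *: one.
Proof.
have [t ht] := trE x; have [n hn] := nrmE x; exists t, n.
have hb : bar x = t *: one - x by rewrite -ht [x + _]addrC addrK.
move: hn; rewrite hb mBr mZr (hone x).2 => <-.
by rewrite opprB addrC subrK.
Qed.

Lemma comm_one_a a a0 b0 : mul (a0 *: one + b0 *: a) a = mul a (a0 *: one + b0 *: a).
Proof. by rewrite mDl mDr !mZl !mZr (hone a).1 (hone a).2. Qed.

Definition cond_ii := forall e1 e2 e3 : V, lin_indep3 e1 e2 e3 ->
      is_subalg mul one (span3 e1 e2 e3) ->
      commutative_on mul (span3 e1 e2 e3) \/ associative_on mul (span3 e1 e2 e3).

Lemma ii_i : cond_ii -> vN_finite mul one.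
Proof.
move=> H a b hab.
case: (classic (lin_indep3 one a b)) => hind.
- have hsq x : span3 one a b x -> span3 one a b (mul x x).
    move=> hx; have [t [n ->]] := quad x.
    by apply: span3B; apply: span3Z => //; exact: span3_1.
  have hba : span3 one a b (mul b a).
    have -> : mul b a = mul (a + b) (a + b) - mul a a - mul a b - mul b b.
      by rewrite mDl !mDr zmod5.
    apply: span3B; [apply: span3B; [apply: span3B|]|].
    - by apply: hsq; apply: span3D; [exact: span3_2|exact: span3_3].
    - by apply: hsq; exact: span3_2.
    - by rewrite hab; exact: span3_1.
    - by apply: hsq; exact: span3_3.
  have hsub : is_subalg mul one (span3 one a b).
    split; first exact: span3_1.
    apply: span3_mul => i j; rewrite !inE => /or3P [] /eqP -> /or3P [] /eqP -> //;
      rewrite ?(hone _).1 ?(hone _).2 ?hab;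
      first [exact: span3_1 | exact: span3_2 | exact: span3_3 | apply: hsq; exact: span3_2
            | apply: hsq; exact: span3_3].
  case: (H _ _ _ hind hsub) => [hc | has].
  + by rewrite hc //; [exact: span3_3 | exact: span3_2].
  + have [t [n hq]] := quad a.
    have e := has a a b (@span3_2 _ _ one a b) (@span3_2 _ _ one a b) (@span3_3 _ _ one a b).
    move: e; rewrite hab (hone a).2 hq mBl !mZl hab (hone b).1 => e.
    case: (eqVneq n 0) => hn.
    * exfalso; have hz : t *: one + (-1) *: a + 0 *: b = 0.
        by rewrite e hn scale0r subr0 scaleN1r addr0 subrr.
      have [_ h _] := hind _ _ _ hz.
      by move/eqP: h; rewrite oppr_eq0 oner_eq0.
    * have hb : b = n^-1 *: (t *: one - a).
        by rewrite e opprB addrCA subrr addr0 scalerA mulVf // scale1r.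
      rewrite hb mZl mBl mZl (hone a).1 hq.
      by rewrite opprB addrCA subrr addr0 scalerA mulVf // scale1r.
- have [a0 [b0 [c0 [he hnz]]]] : exists a0 b0 c0, a0 *: one + b0 *: a + c0 *: b = 0 /\
      ~ [/\ a0 = 0, b0 = 0 & c0 = 0].
    apply: NNPP => hne; apply: hind => a0 b0 c0 he; apply: NNPP => hn; apply: hne.
    by exists a0, b0, c0.
  rewrite -hab.
  case: (eqVneq c0 0) => hc.
  + rewrite hc scale0r addr0 in he; case: (eqVneq b0 0) => hb0.
    * rewrite hb0 scale0r addr0 in he; exfalso; move/eqP: he.
      by rewrite scaler_eq0 (negPf h1) orbF => /eqP ha0; apply: hnz.
    * have ha : a = (- (a0 / b0)) *: one.
        apply: (scalerI hb0); rewrite scalerA mulrN mulrCA mulfV // mulr1 scaleNr.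
        by apply/eqP; rewrite -addr_eq0 addrC he.
      by rewrite ha mZl mZr (hone b).1 (hone b).2.
  + have hb : c0 *: b = - (a0 *: one + b0 *: a).
      by apply/eqP; rewrite -addr_eq0 addrC he.
    by apply: (scalerI hc); rewrite -mZl -mZr hb mNl mNr comm_one_a.
Qed.

Lemma core u v (be ga : F) : bar u = - u -> bar v = - v -> lin_indep3 one u v -> ga != 0 ->
  mul u v - mul v u = be *: u + ga *: v -> vN_finite mul one -> iso_to_U mul (span3 one u v).
Proof.
move=> hu hv hind hg hc hvN.
set w := be *: u + ga *: v.
set z := (2%:R / ga) *: u.
have ew : w = be *: u + ga *: v by [].
have ez : z = (2%:R / ga) *: u by [].
clearbody w z.
have hz : bar z = - z by rewrite ez barZ hu scalerN.
have hw : bar w = - w by rewrite ew barD !barZ hu hv !scalerN opprD.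
have hzw : mul z w - mul w z = 2%:R *: w.
  rewrite ez mZl mZr -scalerBr {1 2}ew mDr mDl !mZr !mZl opprD addrACA subrr add0r.
  by rewrite -scalerBr hc scalerA divfK // ew.
have [p hp] := sq_skew hz. have [q hq] := sq_skew hw. have [s hs] := anti_skew hz hw.
set r := s / 2%:R.
have hzw' : mul z w = r *: one + w.
  apply: (scalerI h2).
  have -> : 2%:R *: mul z w = (mul z w + mul w z) + (mul z w - mul w z).
    by rewrite addrACA subrr addr0 scaler_nat mulr2n.
  rewrite hs hzw [RHS]scalerDr [in RHS]scalerA.
  by have -> : 2%:R * r = s by rewrite /r mulrC divfK.
have hwz' : mul w z = r *: one - w.
  have -> : mul w z = s *: one - mul z w by rewrite -hs [mul z w + _]addrC addrK.
  rewrite hzw'; have -> : s = r + r by rewrite /r; fld.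
  by rewrite scalerDl opprD addrA addrK.
have hind' : lin_indep3 one z w.
  move=> a b c e.
  have e' : cmb one u v a (b * (2%:R / ga) + c * be) (c * ga) = 0.
    by rewrite -cob -ez -ew.
  have [h0 hb hc0] := hind _ _ _ e'.
  have c0 : c = 0 by move/eqP: hc0; rewrite mulf_eq0 (negPf hg) orbF => /eqP.
  split => //; move: hb; rewrite c0 mul0r addr0 => /eqP.
  by rewrite mulf_eq0 mulf_eq0 invr_eq0 (negPf hg) (negPf h2) !orbF => /eqP.
have prod a1 a2 a3 b1 b2 b3 : mul (cmb one z w a1 a2 a3) (cmb one z w b1 b2 b3) =
    cmb one z w (a1 * b1 + a2 * b2 * p + (a2 * b3 + a3 * b2) * r + a3 * b3 * q)
      (a1 * b2 + a2 * b1) (a1 * b3 + a3 * b1 + a2 * b3 - a3 * b2).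
  rewrite mul_cmb !(hone _).1 !(hone _).2 hp hq hzw' hwz'.
  rewrite !scalerDr ?scalerN !scalerA !(sc1 one z w) !(sc2 one z w) !(sc3 one z w).
  rewrite !cmbN !cmbD; congr (cmb _ _ _ _ _ _); ring.
have one_cmb : one = cmb one z w 1 0 0 by rewrite -sc1 scale1r.
have contra (A B : V) k : mul A B = cmb one z w 1 0 0 -> mul B A = cmb one z w 1 0 k -> k = 0.
  rewrite -one_cmb => hAB; rewrite (hvN _ _ hAB) {1}one_cmb.
  by move=> /(cmb_inj hind') [_ _ /esym].
have hq0 : q = 0.
  case: (eqVneq q 0) => // hq0; exfalso.
  have := contra (cmb one z w 1 (-1) ((r + 1) / q)) (cmb one z w 0 0 1) 2%:R.
  rewrite !prod => H.
  have : (2%:R : F) = 0 by apply: H; congr (cmb _ _ _ _ _ _); fld.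
  by apply/eqP.
have hr0 : r = 0.
  case: (eqVneq r 0) => // hr0; exfalso.
  have := contra (cmb one z w 1 (-1) 0) (cmb one z w 0 0 (- 1 / r)) (- 2%:R / r).
  rewrite !prod hq0 => H.
  have : (- 2%:R / r : F) = 0 by apply: H; congr (cmb _ _ _ _ _ _); fld.
  by move/eqP; rewrite mulf_eq0 invr_eq0 oppr_eq0 (negPf h2) (negPf hr0).
have hp1 : p = 1.
  case: (eqVneq p 1) => // hp1; exfalso.
  have hp1' : 1 - p != 0 by rewrite subr_eq0 eq_sym.
  have := contra (cmb one z w 1 (-1) 0) (cmb one z w (1 / (1 - p)) (1 / (1 - p)) 1) 2%:R.
  rewrite !prod hq0 hr0 => H.
  have : (2%:R : F) = 0 by apply: H; congr (cmb _ _ _ _ _ _); fld.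
  by apply/eqP.
pose g (M : 'M[F]_2) := cmb one z w ((M p0 p0 + M p1 p1) / 2%:R)
   ((M p0 p0 - M p1 p1) / 2%:R) (M p0 p1).
have inS a b c : span3 one u v (cmb one z w a b c).
  by rewrite ez ew cob; exists a, (b * (2%:R / ga) + c * be), (c * ga).
exists g; split.
- move=> a M N _ _; rewrite /g !mxE cmbZ cmbD; congr (cmb _ _ _ _ _ _); fld.
- by move=> M _; apply: inS.
- move=> x [a [b [c ->]]].
  pose k := (b * ga - c * be) / 2%:R.
  exists (mk2 (a + k) (c / ga) 0 (a - k)).
    move=> i j; case: (ord2P i) => ->; case: (ord2P j) => -> //= _.
    by rewrite mxE.
  rewrite /g !mxE /= ez ew cob /cmb.
  congr (_ *: _ + _ *: _ + _ *: _); rewrite /k; fld.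
- move=> M N hM hN /(cmb_inj hind') [e1 e2 e3].
  have [e00 e11] := half_inj h2 e1 e2.
  apply/matrixP => i j.
  case: (ord2P i) => ->; case: (ord2P j) => -> //.
  by rewrite hM // hN.
- move=> M N hM hN.
  rewrite /g prod hq0 hr0 hp1 !mx2E (hM p1 p0 isT) (hN p1 p0 isT).
  congr (cmb _ _ _ _ _ _); fld.
Qed.


Lemma bar0 : bar 0 = 0.
Proof. by have := barZ 0 0; rewrite !scale0r. Qed.

Lemma comm_shiftl x y k : mul (x - k *: one) y - mul y (x - k *: one) = mul x y - mul y x.
Proof. by rewrite mBl mBr mZl mZr (hone y).1 (hone y).2 opprB addrA subrK. Qed.
Lemma comm_shiftr x y k : mul x (y - k *: one) - mul (y - k *: one) x = mul x y - mul y x.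
Proof. by rewrite mBl mBr mZl mZr (hone x).1 (hone x).2 opprB addrA subrK. Qed.

Lemma skew_part x t : x + bar x = t *: one ->
  bar (x - (t / 2%:R) *: one) = - (x - (t / 2%:R) *: one).
Proof.
move=> ht; have hb : bar x = t *: one - x by rewrite -ht [x + _]addrC addrK.
rewrite barB barZ bar1 hb opprB.
have -> : t *: one = (t / 2%:R) *: one + (t / 2%:R) *: one by rewrite -scalerDl; congr (_ *: _); fld.
by rewrite (ACl (1*4*2*3)) /= subrr add0r.
Qed.

Lemma indep_skew u v : bar u = - u -> bar v = - v -> mul u v - mul v u != 0 ->
  lin_indep3 one u v.
Proof.
move=> hu hv hc a b c e.
have ha : a = 0.
  have e2 : bar (a *: one + b *: u + c *: v) = 0 by rewrite e bar0.
  rewrite !barD !barZ bar1 hu hv !scalerN in e2.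
  have : cmb one u v (a + a) 0 0 = 0.
    have -> : cmb one u v (a + a) 0 0 = cmb one u v (a + a) (b + - b) (c + - c).
      by rewrite !subrr.
    rewrite -cmbD {1}/cmb e add0r /cmb !scaleNr.
    exact: e2.
  rewrite /cmb !scale0r !addr0 => /eqP; rewrite scaler_eq0 (negPf h1) orbF.
  by rewrite -mulr2n -mulr_natl mulf_eq0 (negPf h2) /= => /eqP.
rewrite ha scale0r add0r in e.
have hb : b = 0.
  apply/eqP; apply: contraNT hc => hb.
  have hu' : u = (- (c / b)) *: v.
    apply: (scalerI hb); rewrite scalerA mulrN mulrCA mulfV // mulr1 scaleNr.
    by apply/eqP; rewrite -addr_eq0 e.
  by rewrite hu' mZl mZr subrr.
rewrite hb scale0r add0r in e.
have hc' : c = 0.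
  apply/eqP; apply: contraNT hc => hc0.
  have -> : v = 0 by move/eqP: e; rewrite scaler_eq0 (negPf hc0) /= => /eqP.
  by rewrite m0r m0l subrr.
by split.
Qed.

Lemma eqv_span e1 e2 e3 f1 f2 f3 :
  span3 e1 e2 e3 f1 -> span3 e1 e2 e3 f2 -> span3 e1 e2 e3 f3 -> lin_indep3 f1 f2 f3 ->
  forall x, span3 e1 e2 e3 x <-> span3 f1 f2 f3 x.
Proof.
move=> h1' h2' h3' hi x; split; first exact: span3_basis.
exact: span3_sub.
Qed.

Lemma iso_transfer (S S' : V -> Prop) : (forall x, S x <-> S' x) ->
  iso_to_U mul S' -> iso_to_U mul S.
Proof.
move=> h [g [ha hb hc hd he]]; exists g; split => //.
- by move=> M hM; apply/h; apply: hb.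
- by move=> x /h; apply: hc.
Qed.

Lemma i_iii : vN_finite mul one -> forall e1 e2 e3 : V, lin_indep3 e1 e2 e3 ->
  is_subalg mul one (span3 e1 e2 e3) ->
  commutative_on mul (span3 e1 e2 e3) \/ iso_to_U mul (span3 e1 e2 e3).
Proof.
move=> hvN e1 e2 e3 hind [hS1 hSm].
case: (classic (commutative_on mul (span3 e1 e2 e3))) => hnc; [by left | right].
have [x [y [hx [hy hxy]]]] : exists x y, span3 e1 e2 e3 x /\ span3 e1 e2 e3 y /\
    mul x y <> mul y x.
  apply: NNPP => hne; apply: hnc => x y hx hy; apply: NNPP => hn; apply: hne.
  by exists x, y.
have [t ht] := trE x; have [t' ht'] := trE y.
have hu := skew_part ht; have hv := skew_part ht'.
set u := x - (t / 2%:R) *: one in hu; set v := y - (t' / 2%:R) *: one in hv.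
have hSu : span3 e1 e2 e3 u by apply: span3B => //; apply: span3Z.
have hSv : span3 e1 e2 e3 v by apply: span3B => //; apply: span3Z.
have hcomm : mul u v - mul v u = mul x y - mul y x by rewrite /u /v comm_shiftl comm_shiftr.
have hc0 : mul u v - mul v u != 0 by rewrite hcomm subr_eq0; apply/eqP.
have hind1 := indep_skew hu hv hc0.
have eqS := eqv_span hS1 hSu hSv hind1.
have hcS : span3 e1 e2 e3 (mul u v - mul v u) by apply: span3B; apply: hSm.
have [a [b [c he]]] := (eqS _).1 hcS.
rewrite -[a *: one + b *: u + c *: v]/(cmb one u v a b c) in he.
have hbc : bar (mul u v - mul v u) = - (mul u v - mul v u).
  by rewrite barB !barM hu hv !mNl !mNr !opprK opprB.
have ha : a = 0.
  have e1' : bar (cmb one u v a b c) = cmb one u v a (-b) (-c).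
    by rewrite /cmb !barD !barZ bar1 hu hv !scalerN !scaleNr.
  have : cmb one u v a (-b) (-c) = cmb one u v (-a) (-b) (-c).
    by rewrite -e1' -cmbN -he hbc.
  move/(cmb_inj hind1) => [ea _ _]; move/eqP: ea.
  by rewrite -addr_eq0 -mulr2n -mulr_natl mulf_eq0 (negPf h2) /= => /eqP.
rewrite ha /cmb scale0r add0r in he.
case: (eqVneq c 0) => hc.
- have hb : b != 0.
    by apply: contraNneq hc0 => hb; rewrite he hb hc !scale0r addr0.
  have hc' : mul v u - mul u v = (- c) *: v + (- b) *: u.
    by rewrite -opprB he opprD !scaleNr addrC.
  apply: (iso_transfer _ (core hv hu (indep_swap hind1) _ hc' hvN)).
  + exact: eqv_span hS1 hSv hSu (indep_swap hind1).
  + by rewrite oppr_eq0.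
- apply: (iso_transfer eqS).
  exact: (core hu hv hind1 hc he hvN).
Qed.

End Main.

Theorem proposition4p8 (F : fieldType) (V : lmodType F)
    (mul : V -> V -> V) (one : V) (bar : V -> V) :
  (2%:R : F) != 0 ->
  bilinear_mul mul -> is_unit_elt mul one -> involutive_alg mul one bar ->
  (vN_finite mul one <->
   (forall e1 e2 e3 : V, lin_indep3 e1 e2 e3 ->
      is_subalg mul one (span3 e1 e2 e3) ->
      commutative_on mul (span3 e1 e2 e3) \/ associative_on mul (span3 e1 e2 e3)))
  /\
  (vN_finite mul one <->
   (forall e1 e2 e3 : V, lin_indep3 e1 e2 e3 ->
      is_subalg mul one (span3 e1 e2 e3) ->
      commutative_on mul (span3 e1 e2 e3) \/ iso_to_U mul (span3 e1 e2 e3))).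
Proof.
move=> h2 hbil hone hinv.
case: (eqVneq one 0) => h1.
- have hall : forall x : V, x = 0.
    by move=> x; rewrite -((hone x).1) h1 (m0l hbil).
  have hvN : vN_finite mul one by move=> a b _; rewrite (hall (mul b a)) (hall one).
  have hno : forall e1 e2 e3 : V, ~ lin_indep3 e1 e2 e3.
    move=> e1 e2 e3 hi; have [h _ _] := hi 1 0 0 (hall _).
    by move/eqP: h; rewrite oner_eq0.
  by split; split => // _ e1 e2 e3 /hno.
- have hiii : vN_finite mul one -> forall e1 e2 e3 : V, lin_indep3 e1 e2 e3 ->
      is_subalg mul one (span3 e1 e2 e3) ->
      commutative_on mul (span3 e1 e2 e3) \/ iso_to_U mul (span3 e1 e2 e3).
    exact: (i_iii hbil h2 hone hinv h1).
  have hii_i := ii_i hbil hone hinv h1.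
  split; split.
  + move=> hvN e1 e2 e3 hi hs; case: (hiii hvN e1 e2 e3 hi hs) => [|hiso]; first by left.
    by right; apply: iso_assoc.
  + exact: hii_i.
  + exact: hiii.
  + move=> H; apply: hii_i => e1 e2 e3 hi hs; case: (H e1 e2 e3 hi hs) => [|hiso]; first by left.
    by right; apply: iso_assoc.
Qed.
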